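(* Let $\mathcal U=\{\mathbf u\in\mathbb R^n:\mathbf u^L\le\mathbf u\le\mathbf u^U\}$ with $0\le u^L_i<u^U_i<\infty$ for all $i$, and let $\widehat{\mathbf u}^j\in\mathcal U$. Given $p\ge1$, $\rho\ge0$ and $\mathbf s\in\mathcal S$, let $\omega_j(\rho,\mathbf s)=\sup_{\mathbf u\in\mathcal U}\{f(\mathbf s,\mathbf u)-\rho\|\mathbf u-\widehat{\mathbf u}^j\|_p^p\}$. Then $$\omega_j(\rho,\mathbf s)=\max_{\mathbf t}\ \sum_{k=1}^n\sum_{\ell=k}^{n+1}\Big(\sum_{i=k}^{\min\{\ell,n\}}z_{i\ell j}\Big)t_{k\ell}\quad\text{s.t.}\quad\sum_{k=1}^i\sum_{\ell=i}^{n+1}t_{k\ell}=1\ \ \forall i\in[n],\quad t_{k\ell}\ge0\ \ \forall k\in[n],\ \ell\in[k,n+1]_{\mathbb Z},$$ where, for $i\in[n]$ and $\ell\in[i,n+1]_{\mathbb Z}$, $z_{i\ell j}=-s_i\pi_{i\ell}+\sup_{u^L_i\le u_i\le u^U_i}\{\pi_{i\ell}u_i-\rho|u_i-\widehat u^j_i|^p\}$, with $\pi_{i\ell}=-d_\ell+\sum_{q=i+1}^\ell c_q$ if $\ell\in[i,n]_{\mathbb Z}$ and $\pi_{i,n+1}=C+\sum_{q=i+1}^nc_q$.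
   Context: Notation: $[m]=\{1,\dots,m\}$, $[i,j]_{\mathbb Z}=\{i,\dots,j\}$. $n\ge1$, $T>0$, $\mathcal S=\{\mathbf s\in\mathbb R^n:\mathbf s\ge0,\sum_is_i\le T\}$; costs $\mathbf c,\mathbf d\in\mathbb R^n_+$, $C\ge0$ with $d_{i+1}-d_i\le c_{i+1}$ ($i\in[n-1]$). $f(\mathbf s,\mathbf u)$ is the optimal value of $\min_{\mathbf w\in\mathbb R^{n+1},\mathbf v\in\mathbb R^n}\sum_{i=1}^n(c_iw_i+d_iv_i)+Cw_{n+1}$ s.t. $w_i-v_{i-1}=u_{i-1}+w_{i-1}-s_{i-1}$ ($i\in[2,n+1]_{\mathbb Z}$), $\mathbf w\ge0,w_1=0,\mathbf v\ge0$. *)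

(* Defs.v *)
From HB Require Import structures.
From mathcomp Require Import all_boot all_order all_algebra.
From mathcomp Require Import all_classical all_reals exp.
Set Implicit Arguments. Unset Strict Implicit. Unset Printing Implicit Defensive.
Import Order.TTheory GRing.Theory Num.Theory.
Local Open Scope classical_set_scope.
Local Open Scope ring_scope.

(* Vectors of R^n are represented as functions nat -> R, using indices 1..n
   (resp. 1..n+1 for w); values at other indices are irrelevant. *)

Section Defs.
Variable R : realType.

Definition lp_feasible (n : nat) (s u w v : nat -> R) : Prop :=
  w 1%N = 0 /\
  (forall i, (1 <= i <= n.+1)%N -> 0 <= w i) /\
  (forall i, (1 <= i <= n)%N -> 0 <= v i) /\
  (forall i, (2 <= i <= n.+1)%N ->
     w i - v i.-1 = u i.-1 + w i.-1 - s i.-1).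

Definition lp_obj (n : nat) (c d : nat -> R) (C : R) (w v : nat -> R) : R :=
  \sum_(1 <= i < n.+1) (c i * w i + d i * v i) + C * w n.+1.

Definition f_val (n : nat) (c d : nat -> R) (C : R) (s u : nat -> R) : R :=
  inf [set r | exists w v, lp_feasible n s u w v /\ r = lp_obj n c d C w v].

Definition in_box (n : nat) (uL uU u : nat -> R) : Prop :=
  forall i, (1 <= i <= n)%N -> uL i <= u i <= uU i.

Definition pnorm_pow (n : nat) (p : R) (u uh : nat -> R) : R :=
  \sum_(1 <= i < n.+1) (`|u i - uh i| `^ p).

Definition omega (n : nat) (c d : nat -> R) (C : R) (uL uU uh : nat -> R)
  (p rho : R) (s : nat -> R) : R :=
  sup [set f_val n c d C s u - rho * pnorm_pow n p u uh | u in in_box n uL uU].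

Definition pi_coef (n : nat) (c d : nat -> R) (C : R) (i l : nat) : R :=
  if (l <= n)%N then - d l + \sum_(i.+1 <= q < l.+1) c q
  else C + \sum_(i.+1 <= q < n.+1) c q.

Definition z_coef (n : nat) (c d : nat -> R) (C : R) (uL uU uh : nat -> R)
  (p rho : R) (s : nat -> R) (i l : nat) : R :=
  - s i * pi_coef n c d C i l +
  sup [set pi_coef n c d C i l * x - rho * (`|x - uh i| `^ p)
      | x in [set x | uL i <= x <= uU i]].

Definition t_feasible (n : nat) (t : nat -> nat -> R) : Prop :=
  (forall i, (1 <= i <= n)%N ->
     \sum_(1 <= k < i.+1) \sum_(i <= l < n.+2) t k l = 1) /\
  (forall k l, (1 <= k <= n)%N -> (k <= l <= n.+1)%N -> 0 <= t k l).

Definition t_obj (n : nat) (z : nat -> nat -> R) (t : nat -> nat -> R) : R :=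
  \sum_(1 <= k < n.+1) \sum_(k <= l < n.+2)
     (\sum_(k <= i < (minn l n).+1) z i l) * t k l.

End Defs.

(* Main.v *)
Require Import Defs.
From HB Require Import structures.
From mathcomp Require Import all_boot all_order all_algebra.
From mathcomp Require Import all_classical all_reals exp.
From mathcomp Require Import zify ring lra.
Import Order.TTheory GRing.Theory Num.Theory.

Local Open Scope ring_scope.
Section DP.
Variables (R : realType) (n : nat) (g : nat -> nat -> R).

Definition aa k l := \sum_(k <= i < (minn l n).+1) g i l.
Definition AA k j := if j == n then Num.max (aa k n) (aa k n.+1) else aa k j.
Fixpoint DPf m j : R := match m with
  | 0 => 0
  | m'.+1 => if j == 0%N then 0 else
     \big[Num.max/(DPf m' 0 + AA 1 j)]_(1 <= k < j.+1) (DPf m' k.-1 + AA k j)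
  end.

Lemma DPf_S m j : DPf m.+1 j = if j == 0%N then 0 else
     \big[Num.max/(DPf m 0 + AA 1 j)]_(1 <= k < j.+1) (DPf m k.-1 + AA k j).
Proof. by []. Qed.

Lemma DPf_succ m j : (j <= m)%N -> DPf m.+1 j = DPf m j.
Proof.
elim: m j => [|m IH] j Hj.
  by case: j Hj.
rewrite DPf_S [DPf m.+1 j]DPf_S.
case: (j == 0%N) => //.
rewrite IH //; apply: eq_big_nat => k Hk; rewrite IH //; lia.
Qed.

Lemma DPf_stable m j : (j <= m)%N -> DPf m j = DPf j j.
Proof.
elim: m => [|m IH] Hj; first by case: j Hj.
case: (eqVneq j m.+1) => [->//|Hne].
rewrite DPf_succ; last lia. apply: IH; lia.
Qed.

Definition F j := DPf j j.

Lemma F0 : F 0 = 0. Proof. by []. Qed.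

Lemma F_unfold j : (0 < j)%N ->
  F j = \big[Num.max/(F 0 + AA 1 j)]_(1 <= k < j.+1) (F k.-1 + AA k j).
Proof.
case: j => [//|j] _; rewrite /F DPf_S /=.
rewrite (@DPf_stable j 0) //.
apply: eq_big_nat => k Hk; rewrite DPf_stable //; lia.
Qed.

Lemma bigmax_ge (r : seq nat) x0 (f : nat -> R) :
  x0 <= \big[Num.max/x0]_(k <- r) f k /\
  forall k, k \in r -> f k <= \big[Num.max/x0]_(k <- r) f k.
Proof.
elim: r => [|a r [IH1 IH2]]; first by rewrite big_nil; split.
rewrite big_cons; split.
  by rewrite le_max IH1 orbT.
move=> k; rewrite inE => /orP[/eqP->|Hk]; first by rewrite le_max lexx.
by rewrite le_max IH2 ?orbT.
Qed.

Lemma bigmax_att (r : seq nat) x0 (f : nat -> R) :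
  \big[Num.max/x0]_(k <- r) f k = x0 \/
  exists2 k, k \in r & \big[Num.max/x0]_(k <- r) f k = f k.
Proof.
elim: r => [|a r IH]; first by rewrite big_nil; left.
rewrite big_cons maxEle; case: ifP => _; last by right; exists a; rewrite ?inE ?eqxx.
case: IH => [->|[k Hk ->]]; first by left.
by right; exists k; rewrite // inE Hk orbT.
Qed.

Lemma F_ge k l j : (1 <= k <= j)%N -> (j <= n)%N -> (k <= l <= n.+1)%N ->
  minn l n = j -> F k.-1 + aa k l <= F j.
Proof.
move=> Hk Hj Hl Hm.
rewrite (@F_unfold j); last lia.
have [_ H] := bigmax_ge (index_iota 1 j.+1) (F 0 + AA 1 j) (fun k => F k.-1 + AA k j).
apply: le_trans (H k _); last by rewrite mem_index_iota; lia.
rewrite lerD2l /AA.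
case: eqP => Hjn.
  have : (l == n) || (l == n.+1) by lia.
  by case/orP => /eqP->; rewrite le_max lexx ?orbT.
have -> : l = j by lia.
by [].
Qed.

Lemma F_att j : (1 <= j <= n)%N -> exists k l, (1 <= k <= j)%N /\ (k <= l <= n.+1)%N /\
  minn l n = j /\ F j = F k.-1 + aa k l.
Proof.
move=> Hj.
have Hex : exists k, (1 <= k <= j)%N /\ F j = F k.-1 + AA k j.
  rewrite (@F_unfold j); last lia.
  case: (bigmax_att (index_iota 1 j.+1) (F 0 + AA 1 j) (fun k => F k.-1 + AA k j)) => [->|[k Hk ->]].
    by exists 1%N; split => //; lia.
  by exists k; rewrite mem_index_iota in Hk; split => //; lia.
case: Hex => k [Hk ->].
rewrite /AA; case: eqP => Hjn.
  rewrite maxEle; case: ifP => _.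
    by exists k, n.+1; do !split => //; lia.
  by exists k, n; do !split => //; lia.
by exists k, j; do !split => //; lia.
Qed.

End DP.
Arguments F {R} n g j.
Arguments aa {R} n g k l.
Arguments AA {R} n g k j.

Lemma F_mono (R : realType) n (g g' : nat -> nat -> R) (h : nat -> R) :
  (forall i l, (1 <= i <= n)%N -> (i <= l <= n.+1)%N -> g i l - h i <= g' i l) ->
  forall j, (j <= n)%N -> F n g j - \sum_(1 <= i < j.+1) h i <= F n g' j.
Proof.
move=> Hg; elim/ltn_ind => j IH Hj.
case: (posnP j) => [->|Hj0]; first by rewrite big_geq // !F0 subr0.
have [k [l [Hk [Hl [Hm HF]]]]] := @F_att R n g j ltac:(lia).
have IHk := IH k.-1 ltac:(lia) ltac:(lia).
have Hge := @F_ge R n g' k l j ltac:(lia) ltac:(lia) ltac:(lia) Hm.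
have Hsp : \sum_(1 <= i < j.+1) h i = \sum_(1 <= i < k) h i + \sum_(k <= i < j.+1) h i.
  rewrite (@big_cat_nat _ _ _ k) //; lia.
rewrite prednK in IHk; last lia.
have Ha : aa n g k l - \sum_(k <= i < j.+1) h i <= aa n g' k l.
  rewrite /aa Hm -sumrB; apply: ler_sum_nat => i Hi; apply: Hg; lia.
rewrite HF Hsp; lra.
Qed.
Section Exch.
Variables (R : realType) (n : nat).

Lemma sumfull (a b N : nat) (f : nat -> R) : (b <= N)%N ->
  \sum_(a <= i < b) f i = \sum_(0 <= i < N) (if (a <= i < b)%N then f i else 0).
Proof.
move=> HbN; rewrite (big_nat_widen _ _ N) // (big_nat_widenl _ 0) // big_mkcond.
apply: eq_bigr => i _; congr (if _ then _ else _); lia.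
Qed.

Lemma sum_if (b : bool) (r : seq nat) (f : nat -> R) :
  (if b then \sum_(i <- r) f i else 0) = \sum_(i <- r) (if b then f i else 0).
Proof. by case: b => //; rewrite big1. Qed.

Lemma sum_delta (m N i0 : nat) (f : nat -> R) :
  \sum_(m <= i < N) (if i == i0 then f i else 0) = if (m <= i0 < N)%N then f i0 else 0.
Proof. by rewrite -big_mkcond big_nat1_eq. Qed.

Lemma sum_nat_eq0 (m N : nat) (f : nat -> R) :
  (forall i, (m <= i < N)%N -> 0 <= f i) -> \sum_(m <= i < N) f i = 0 ->
  forall i, (m <= i < N)%N -> f i = 0.
Proof.
move=> H0 Hs i Hi; move/eqP: Hs.
rewrite big_nat_cond psumr_eq0; last by move=> j /andP[Hj _]; apply: H0.
move/allP => /(_ i); rewrite mem_index_iota Hi => /(_ isT) /implyP /(_ isT) /eqP.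
done.
Qed.

Lemma exch (h : nat -> nat -> R) (t : nat -> nat -> R) :
 \sum_(1 <= k < n.+1) \sum_(k <= l < n.+2) (\sum_(k <= i < (minn l n).+1) h i l) * t k l =
 \sum_(1 <= i < n.+1) \sum_(1 <= k < i.+1) \sum_(i <= l < n.+2) h i l * t k l.
Proof.
pose N := n.+2.
transitivity (\sum_(0 <= k < N) \sum_(0 <= l < N) \sum_(0 <= i < N)
   (if [&& (1 <= k < n.+1)%N, (k <= l < n.+2)%N & (k <= i < (minn l n).+1)%N]
    then h i l * t k l else 0)).
  rewrite (sumfull 1 n.+1 N) //; apply: eq_bigr => k _.
  case: ifP => Hk /=; last first.
    by rewrite big1 // => l _; rewrite big1.
  rewrite (sumfull k n.+2 N) //; apply: eq_bigr => l _.
  case: ifP => Hl /=; last by rewrite big1.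
  rewrite mulr_suml (sumfull k (minn l n).+1 N); last lia.
  apply: eq_bigr => i _; case: ifP => //; by rewrite mul0r.
transitivity (\sum_(0 <= i < N) \sum_(0 <= k < N) \sum_(0 <= l < N)
   (if [&& (1 <= i < n.+1)%N, (1 <= k < i.+1)%N & (i <= l < n.+2)%N]
    then h i l * t k l else 0)); last first.
  apply/esym; rewrite (sumfull 1 n.+1 N) //; apply: eq_bigr => i _.
  case: ifP => Hi /=; last first.
    by rewrite big1 // => k _; rewrite big1.
  rewrite (sumfull 1 i.+1 N); last lia; apply: eq_bigr => k _.
  case: ifP => Hk /=; last by rewrite big1.
  rewrite (sumfull i n.+2 N) //.
under eq_bigr => k _ do rewrite exchange_big.
rewrite exchange_big /=; apply: eq_bigr => i _; apply: eq_bigr => k _.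
apply: eq_bigr => l _; congr (if _ then _ else _); lia.
Qed.

End Exch.

Section TLP.
Variables (R : realType) (n : nat) (g : nat -> nat -> R).

Definition cov (t : nat -> nat -> R) i :=
  \sum_(1 <= k < i.+1) \sum_(i <= l < n.+2) t k l.

Lemma D1 t : t_feasible n t -> t_obj n g t <= F n g n.
Proof.
case=> Hcov Hpos.
pose y := fun i => F n g i - F n g i.-1.
apply: (@le_trans _ _ (\sum_(1 <= k < n.+1) \sum_(k <= l < n.+2)
    (\sum_(k <= i < (minn l n).+1) y i) * t k l)).
  apply: ler_sum_nat => k Hk; apply: ler_sum_nat => l Hl.
  apply: ler_wpM2r; first by apply: Hpos; lia.
  have Hle : (k <= (minn l n).+1)%N by lia.
  have Ht := @telescope_sumr R k (minn l n).+1 (fun i => F n g i.-1) Hle.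
  simpl in Ht; rewrite /y Ht.
  have := @F_ge R n g k l (minn l n); rewrite /aa => H.
  have {}H := H ltac:(lia) ltac:(lia) ltac:(lia) erefl; lra.
rewrite exch.
rewrite (eq_big_nat _ _ (F2 := fun i => y i)); last first.
  move=> i Hi; rewrite -[RHS]mulr1 -(Hcov i); last lia.
  rewrite mulr_sumr; apply: eq_bigr => k _; rewrite mulr_sumr; done.
have Ht := @telescope_sumr R 1 n.+1 (fun i => F n g i.-1) ltac:(lia).
simpl in Ht; rewrite /y Ht F0 subr0 //.
Qed.

Lemma tobj_add t1 t2 : t_obj n g (fun k l => t1 k l + t2 k l) = t_obj n g t1 + t_obj n g t2.
Proof.
rewrite /t_obj -big_split; apply: eq_bigr => k _; rewrite -big_split.
by apply: eq_bigr => l _; rewrite mulrDr.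
Qed.

Lemma cov_add t1 t2 i : cov (fun k l => t1 k l + t2 k l) i = cov t1 i + cov t2 i.
Proof.
rewrite /cov -big_split; apply: eq_bigr => k _; rewrite -big_split //.
Qed.

Definition edelta (k0 l0 : nat) (k l : nat) : R :=
  if k == k0 then (if l == l0 then 1 else 0) else 0.

Lemma cov_e k0 l0 i : cov (edelta k0 l0) i =
  if (1 <= k0 < i.+1)%N then (if (i <= l0 < n.+2)%N then 1 else 0) else 0.
Proof.
rewrite /cov /edelta.
under eq_bigr => k _ do rewrite -sum_if.
by rewrite sum_delta sum_delta.
Qed.

Lemma tobj_e k0 l0 : (1 <= k0 <= n)%N -> (k0 <= l0 <= n.+1)%N ->
  t_obj n g (edelta k0 l0) = aa n g k0 l0.
Proof.
move=> Hk Hl; rewrite /t_obj /edelta.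
under eq_bigr => k _.
  under eq_bigr => l _.
    rewrite (_ : _ * _ = if k == k0 then (if l == l0 then aa n g k l else 0) else 0);
      last by case: (k == k0); case: (l == l0); rewrite ?mulr1 ?mulr0.
  over.
  rewrite -sum_if.
over.
rewrite sum_delta; case: ifP => H1; last lia.
rewrite sum_delta; case: ifP => H2 //; lia.
Qed.

Lemma D2 j : (j <= n)%N -> exists t (Lab : nat -> nat),
 (forall k l, (1 <= k <= n)%N -> (k <= l <= n.+1)%N -> 0 <= t k l) /\
 (forall i, (1 <= i <= n)%N -> cov t i = if (i <= j)%N then 1 else 0) /\
 (forall i k l, (1 <= i <= j)%N -> (1 <= k <= i)%N -> (i <= l <= n.+1)%N ->
     t k l != 0 -> l = Lab i) /\
 t_obj n g t = F n g j.
Proof.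
elim/ltn_ind: j => j IH Hj.
case: (posnP j) => [->|Hj0].
  exists (fun _ _ => 0), (fun _ => 0%N); split; first by [].
  split.
    move=> i Hi; rewrite /cov big1; first by case: ifP => //; lia.
    by move=> k _; rewrite big1.
  split; first by move=> i k l Hi; lia.
  by rewrite /t_obj big1 // => k _; rewrite big1 // => l _; rewrite mulr0.
have [k [l [Hk [Hl [Hm HF]]]]] := @F_att R n g j ltac:(lia).
have [t' [Lab' [P0 [Pc [PL Po]]]]] := IH k.-1 ltac:(lia) ltac:(lia).
exists (fun k' l' => t' k' l' + edelta k l k' l'),
       (fun i => if (i < k)%N then Lab' i else l).
split.
  move=> k' l' H1 H2; apply: addr_ge0; first exact: P0.
  by rewrite /edelta; case: (k' == k); case: (l' == l).
split.
  move=> i Hi; rewrite (cov_add t' (edelta k l)) Pc // cov_e.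
  by repeat (case: ifP => ?);
    rewrite ?addr0 ?add0r //; exfalso; lia.
split.
  move=> i k' l' Hi Hk' Hl' /=.
  case: ifP => Hik.
    have -> : edelta k l k' l' = 0 by rewrite /edelta; case: eqP => //; lia.
    by rewrite addr0; apply: PL; lia.
  have Hz : t' k' l' = 0.
    have Hc : cov t' i = 0 by rewrite Pc //; [case: ifP => //; lia | lia].
    have H1 := @sum_nat_eq0 R 1 i.+1 (fun k1 => \sum_(i <= l1 < n.+2) t' k1 l1).
    have H2 : forall k1, (1 <= k1 < i.+1)%N -> \sum_(i <= l1 < n.+2) t' k1 l1 = 0.
      apply: H1 Hc => k1 Hk1; rewrite big_nat_cond; apply: sumr_ge0 => l1 /andP[Hl1 _]; apply: P0; lia.
    have H3 := H2 k' ltac:(lia).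
    apply: (@sum_nat_eq0 R i n.+2 (fun l1 => t' k' l1) _ H3); last lia.
    move=> l1 Hl1; apply: P0; lia.
  rewrite Hz add0r /edelta.
  case: (eqVneq l' l) => [-> //|Hne].
  by case: (k' == k); rewrite eqxx.
rewrite (tobj_add t' (edelta k l)) Po tobj_e; [|lia|lia].
by rewrite HF /aa.
Qed.

End TLP.
Section Main.
Variables (R : realType) (n : nat) (C : R) (c d : nat -> R).
Hypothesis n1 : (1 <= n)%N.
Hypothesis cd0 : forall i, (1 <= i <= n)%N -> 0 <= c i /\ 0 <= d i.
Hypothesis C0 : 0 <= C.
Hypothesis dinc : forall i, (1 <= i < n)%N -> d i.+1 - d i <= c i.+1.

Local Notation pic := (pi_coef n c d C).
Definition cp q := if q == n.+1 then C else c q.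

Lemma pi_le_n i l : (l <= n)%N -> pic i l = - d l + \sum_(i.+1 <= q < l.+1) c q.
Proof. by move=> H; rewrite /pi_coef H. Qed.

Lemma pi_np1 i : pic i n.+1 = C + \sum_(i.+1 <= q < n.+1) c q.
Proof. by rewrite /pi_coef ltnn. Qed.

Lemma pi_split i l : (i < n)%N -> (i < l)%N -> (l <= n.+1)%N -> pic i l = pic i.+1 l + c i.+1.
Proof.
move=> Hin Hil Hl1; case: (leqP l n) => Hl.
  have Hlt : (i.+1 < l.+1)%N by lia.
  rewrite !pi_le_n // big_ltn //; lra.
have -> : l = n.+1 by lia.
have Hlt : (i.+1 < n.+1)%N by lia.
rewrite !pi_np1 big_ltn //; lra.
Qed.

Lemma pi_ge i l : (1 <= i <= n)%N -> (i <= l <= n.+1)%N -> - d i <= pic i l.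
Proof.
move=> Hi Hil; case: (leqP l n) => Hl.
  rewrite pi_le_n //.
  have H : forall m, (i + m <= n)%N ->
      d (i + m) - d i <= \sum_(i.+1 <= q < (i + m).+1) c q.
    elim=> [|m IH] Hm.
      by rewrite addn0 big_geq // subrr.
    rewrite addnS big_nat_recr /=; last lia.
    have := IH ltac:(lia); have := dinc (i + m) ltac:(lia); lra.
  have := H (l - i)%N ltac:(lia); rewrite (_ : (i + (l - i))%N = l); last lia.
  lra.
have -> : l = n.+1 by lia.
rewrite pi_np1.
have : 0 <= \sum_(i.+1 <= q < n.+1) c q.
  rewrite big_nat_cond; apply: sumr_ge0 => q /andP[Hq _]; have := cd0 q ltac:(lia); case; done.
move=> Hs; have [_ Hd] := cd0 i Hi.
apply: (@le_trans _ _ 0); first by rewrite oppr_le0.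
exact: addr_ge0.
Qed.

Lemma pi_le_C l : (n <= l <= n.+1)%N -> pic n l <= C.
Proof.
move=> Hl; case: (leqP l n) => Hln.
  have -> : l = n by lia.
  rewrite pi_le_n // big_geq //; have := cd0 n ltac:(lia); case=> _ Hd.
  have HC := C0; lra.
have -> : l = n.+1 by lia.
by rewrite pi_np1 big_geq // addr0.
Qed.

Definition dualf (pi : nat -> R) :=
  (forall i, (1 <= i <= n)%N -> - d i <= pi i) /\
  (forall i, (1 <= i < n)%N -> pi i - pi i.+1 <= c i.+1) /\ pi n <= C.

Lemma obj_shift (w v : nat -> R) : w 1%N = 0 ->
  lp_obj n c d C w v = \sum_(1 <= i < n.+1) (cp i.+1 * w i.+1 + d i * v i).
Proof.
move=> Hw1; rewrite /lp_obj !big_split /=.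
have E1 : \sum_(1 <= i < n.+1) c i * w i = \sum_(1 <= i < n) c i.+1 * w i.+1.
  by rewrite big_ltn // Hw1 mulr0 add0r big_add1.
have E2 : \sum_(1 <= i < n.+1) cp i.+1 * w i.+1 =
    \sum_(1 <= i < n) c i.+1 * w i.+1 + C * w n.+1.
  rewrite big_nat_recr //= /cp eqxx; congr (_ + _).
  apply: eq_big_nat => i Hi; case: eqP => //; lia.
rewrite E1 E2; lra.
Qed.

Lemma weak_dual (s u w v pi : nat -> R) :
  lp_feasible n s u w v -> dualf pi ->
  \sum_(1 <= i < n.+1) pi i * (u i - s i) <= lp_obj n c d C w v.
Proof.
move=> [Hw1 [Hw [Hv Hcon]]] [D1 [D2 D3]].
rewrite obj_shift //.
have E1 : \sum_(1 <= i < n.+1) pi i * (u i - s i) =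
   \sum_(1 <= i < n.+1) pi i * w i.+1 - \sum_(1 <= i < n.+1) pi i * w i
   - \sum_(1 <= i < n.+1) pi i * v i.
  rewrite -!sumrB; apply: eq_big_nat => i Hi.
  have := Hcon i.+1 ltac:(lia); rewrite /= => H.
  have -> : u i - s i = w i.+1 - w i - v i by lra.
  ring.
have E2 : \sum_(1 <= i < n.+1) pi i * w i.+1 =
    \sum_(1 <= i < n) pi i * w i.+1 + pi n * w n.+1.
  by rewrite big_nat_recr.
have E3 : \sum_(1 <= i < n.+1) pi i * w i = \sum_(1 <= i < n) pi i.+1 * w i.+1.
  by rewrite big_ltn // Hw1 mulr0 add0r big_add1.
have E4 : \sum_(1 <= i < n.+1) (cp i.+1 * w i.+1 + d i * v i) =
    \sum_(1 <= i < n) (c i.+1 * w i.+1) + C * w n.+1 + \sum_(1 <= i < n.+1) d i * v i.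
  rewrite big_split /= big_nat_recr //= /cp eqxx; congr (_ + _ + _).
  apply: eq_big_nat => i Hi; case: eqP => //; lia.
have I1 : \sum_(1 <= i < n) pi i * w i.+1 <=
    \sum_(1 <= i < n) pi i.+1 * w i.+1 + \sum_(1 <= i < n) c i.+1 * w i.+1.
  rewrite -big_split; apply: ler_sum_nat => i Hi /=.
  rewrite -mulrDl; apply: ler_wpM2r; first by apply: Hw; lia.
  have := D2 i ltac:(lia); lra.
have I2 : - \sum_(1 <= i < n.+1) pi i * v i <= \sum_(1 <= i < n.+1) d i * v i.
  rewrite -sumrN; apply: ler_sum_nat => i Hi.
  rewrite -mulNr; apply: ler_wpM2r; first by apply: Hv; lia.
  have := D1 i ltac:(lia); lra.
have I3 : pi n * w n.+1 <= C * w n.+1.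
  by apply: ler_wpM2r => //; apply: Hw; lia.
rewrite E1 E2 E3 E4; lra.
Qed.

Definition pit (t : nat -> nat -> R) i :=
  \sum_(1 <= k < i.+1) \sum_(i <= l < n.+2) pic i l * t k l.

Lemma dualf_t t : t_feasible n t -> dualf (pit t).
Proof.
move=> [Hcov Hpos]; split; [|split].
- move=> i Hi; rewrite /pit.
  have -> : - d i = \sum_(1 <= k < i.+1) \sum_(i <= l < n.+2) (- d i) * t k l.
    rewrite -[LHS]mulr1 -(Hcov i Hi) mulr_sumr; apply: eq_bigr => k _.
    by rewrite mulr_sumr.
  apply: ler_sum_nat => k Hk; apply: ler_sum_nat => l Hl.
  apply: ler_wpM2r; first by apply: Hpos; lia.
  apply: pi_ge; lia.
- move=> i Hi.
  pose al := \sum_(1 <= k < i.+1) t k i.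
  pose be := \sum_(1 <= k < i.+1) \sum_(i.+1 <= l < n.+2) t k l.
  pose ga := \sum_(i.+1 <= l < n.+2) t i.+1 l.
  pose P := \sum_(1 <= k < i.+1) \sum_(i.+1 <= l < n.+2) pic i.+1 l * t k l.
  pose Q := \sum_(i.+1 <= l < n.+2) pic i.+1 l * t i.+1 l.
  have Ei : pit t i = - d i * al + P + c i.+1 * be.
    rewrite /pit /al /P /be mulr_sumr mulr_sumr -!big_split /=.
    apply: eq_big_nat => k Hk; rewrite big_ltn; last lia.
    rewrite pi_le_n; last lia.
    rewrite [\sum_(i.+1 <= q < i.+1) c q]big_geq // addr0 mulr_sumr -addrA -big_split /=; congr (_ + _).
    apply: eq_big_nat => l Hl; rewrite pi_split; [ring|lia|lia|lia].
  have Ei1 : pit t i.+1 = P + Q by rewrite /pit [LHS]big_nat_recr.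
  have C1 : al + be = 1.
    rewrite -(Hcov i) /al /be; last lia.
    rewrite -big_split; apply: eq_big_nat => k Hk /=; rewrite [RHS]big_ltn //; lia.
  have C2 : be + ga = 1.
    rewrite -(Hcov i.+1) /be /ga; last lia.
    by rewrite [RHS]big_nat_recr.
  have Qb : - d i.+1 * ga <= Q.
    rewrite /Q /ga mulr_sumr; apply: ler_sum_nat => l Hl.
    apply: ler_wpM2r; first by apply: Hpos; lia.
    apply: pi_ge; lia.
  have al0 : 0 <= al.
    rewrite /al big_nat_cond; apply: sumr_ge0 => k /andP[Hk _]; apply: Hpos; lia.
  have key : al * (d i.+1 - d i - c i.+1) <= 0.
    apply: mulr_ge0_le0 => //; have := dinc i Hi; lra.
  have Hga : ga = al by lra.
  rewrite Hga in Qb.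
  have Hbe : be = 1 - al by lra.
  rewrite Ei Ei1 Hbe; nra.
- rewrite /pit.
  apply: (@le_trans _ _ (\sum_(1 <= k < n.+1) \sum_(n <= l < n.+2) C * t k l)); last first.
    under eq_bigr do rewrite -mulr_sumr.
    by rewrite -mulr_sumr Hcov ?mulr1 //; lia.
  apply: ler_sum_nat => k Hk; apply: ler_sum_nat => l Hl.
  apply: ler_wpM2r; first by apply: Hpos; lia.
  apply: pi_le_C; lia.
Qed.


Section Greedy.
Variables (s u : nat -> R).

Definition ee i := u i - s i.
Definition pos (y : R) := if 0 < y then y else 0.
Definition negp (y : R) := if 0 < y then 0 else - y.
Fixpoint gw j : R := match j with
  | 0 => 0
  | j'.+1 => if j' == 0%N then 0 else pos (gw j' + ee j')
  end.
Definition gv i := negp (gw i + ee i).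
Definition cost i := cp i.+1 * gw i.+1 + d i * gv i.
Definition gu i l := pic i l * ee i.

Lemma gw_S j : (1 <= j)%N -> gw j.+1 = pos (gw j + ee j).
Proof. by case: j. Qed.

Lemma maxdiff (y : R) : pos y - negp y = y.
Proof. by rewrite /pos /negp; case: ifP => _; rewrite ?subr0 ?sub0r ?opprK. Qed.

Lemma pos_ge0 (y : R) : 0 <= pos y.
Proof. by rewrite /pos; case: ifP => // H; apply: ltW. Qed.

Lemma negp_ge0 (y : R) : 0 <= negp y.
Proof. by rewrite /negp; case: ifP => // H; rewrite oppr_ge0 leNgt H. Qed.

Lemma gw_ge0 i : 0 <= gw i.
Proof. case: i => [|j] //=; case: ifP => // _; exact: pos_ge0. Qed.

Lemma greedy_feas : lp_feasible n s u gw gv.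
Proof.
split; first by [].
split; first by move=> i _; apply: gw_ge0.
split; first by move=> i _; apply: negp_ge0.
move=> i Hi; case: i Hi => [|j] Hj; first lia.
rewrite gw_S /=; last lia.
rewrite /gv maxdiff /ee; ring.
Qed.

Lemma greedy_inv j : (1 <= j <= n.+1)%N -> exists k, (1 <= k <= j)%N /\
  \sum_(1 <= i < k) cost i <= F n gu k.-1 /\
  gw j = \sum_(k <= m < j) ee m /\
  \sum_(k <= i < j) cost i = \sum_(k <= m < j) ee m * \sum_(m.+1 <= q < j.+1) cp q.
Proof.
elim: j => [|j IH] Hj; first lia.
case: (posnP j) => [->|Hj0].
  exists 1%N; split => //; rewrite !big_geq // F0; split => //.
have [k [Hk [P1 [P2 P3]]]] := IH ltac:(lia).
have Hy : gw j + ee j = \sum_(k <= m < j.+1) ee m.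
  by rewrite big_nat_recr /= -?P2 //; lia.
have E2 : \sum_(k <= m < j.+1) ee m * \sum_(m.+1 <= q < j.+1) cp q =
          \sum_(k <= m < j) ee m * \sum_(m.+1 <= q < j.+1) cp q.
  rewrite [LHS]big_nat_recr /=; last lia.
  by rewrite [X in _ + ee j * X]big_geq // mulr0 addr0.
case Hpos: (0 < gw j + ee j).
  exists k; split; first lia; split; first done.
  rewrite gw_S; last lia.
  rewrite /pos Hpos.
  split; first done.
  have Ev : gv j = 0 by rewrite /gv /negp Hpos.
  have E : \sum_(k <= m < j.+1) ee m * \sum_(m.+1 <= q < j.+2) cp q =
     \sum_(k <= m < j.+1) ee m * \sum_(m.+1 <= q < j.+1) cp q +
     cp j.+1 * \sum_(k <= m < j.+1) ee m.
    rewrite mulr_sumr -big_split; apply: eq_big_nat => m Hm /=.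
    rewrite [in LHS]big_nat_recr /=; [ring | lia].
  rewrite E E2 big_nat_recr /=; last lia.
  rewrite P3 /cost gw_S; last lia.
  rewrite /pos Hpos.
  rewrite Ev Hy; ring.
exists j.+1; split; first lia.
have Ew : gw j.+1 = 0 by rewrite gw_S ?/pos ?Hpos //; lia.
have Ev : gv j = - (gw j + ee j) by rewrite /gv /negp Hpos.
split; last first.
  by rewrite Ew !big_geq.
rewrite (@big_cat_nat _ _ _ k) //=; try lia.
rewrite big_nat_recr /=; last lia.
rewrite P3 /cost Ew Ev Hy mulr0 add0r.
have Hjn : (j <= n)%N by lia.
have Ha : aa n gu k j = \sum_(k <= m < j) ee m * \sum_(m.+1 <= q < j.+1) cp q
     - d j * \sum_(k <= m < j.+1) ee m.
  rewrite /aa (minn_idPl Hjn) -E2 mulr_sumr -sumrB; apply: eq_big_nat => m Hm.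
  rewrite /gu pi_le_n //.
  have -> : \sum_(m.+1 <= q < j.+1) c q = \sum_(m.+1 <= q < j.+1) cp q.
    apply: eq_big_nat => q Hq; rewrite /cp; case: eqP => //; lia.
  ring.
have Hge := @F_ge R n gu k j j ltac:(lia) Hjn ltac:(lia) (minn_idPl Hjn).
rewrite Ha in Hge; lra.
Qed.

Lemma greedy_bound : lp_obj n c d C gw gv <= F n gu n.
Proof.
rewrite obj_shift //.
have [k [Hk [P1 [P2 P3]]]] := greedy_inv n.+1 ltac:(lia).
case: (eqVneq k n.+1) => [Ek|Hkn].
  by rewrite Ek /= in P1.
rewrite (@big_cat_nat _ _ _ k) //=; try lia.
rewrite -/(cost _).
have Hcost : \sum_(k <= i < n.+1) (cp i.+1 * gw i.+1 + d i * gv i) = \sum_(k <= i < n.+1) cost i by [].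
rewrite Hcost P3.
have Ha : aa n gu k n.+1 = \sum_(k <= m < n.+1) ee m * \sum_(m.+1 <= q < n.+2) cp q.
  rewrite /aa (_ : minn n.+1 n = n); last lia.
  apply: eq_big_nat => m Hm; rewrite /gu pi_np1.
  rewrite [\sum_(m.+1 <= q < n.+2) cp q]big_nat_recr /=; last lia.
  rewrite (_ : cp n.+1 = C); last by rewrite /cp eqxx.
  have -> : \sum_(m.+1 <= q < n.+1) c q = \sum_(m.+1 <= q < n.+1) cp q.
    apply: eq_big_nat => q Hq; rewrite /cp; case: eqP => //; lia.
  ring.
have Hge := @F_ge R n gu k n.+1 n ltac:(lia) (leqnn n) ltac:(lia) ltac:(lia).
have Hc : \sum_(1 <= i < k) (cp i.+1 * gw i.+1 + d i * gv i) = \sum_(1 <= i < k) cost i by [].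
rewrite Hc; lra.
Qed.

End Greedy.


Section Omega.
Local Open Scope classical_set_scope.
Local Open Scope ring_scope.
Variables (uL uU uh : nat -> R) (p rho : R) (s : nat -> R).
Hypothesis box0 : forall i, (1 <= i <= n)%N -> 0 <= uL i /\ uL i < uU i.
Hypothesis rho0 : 0 <= rho.

Local Notation z := (z_coef n c d C uL uU uh p rho s).

Definition Sset i l := [set pic i l * x - rho * (`|x - uh i| `^ p)
      | x in [set x | uL i <= x <= uU i]].

Lemma S_ub i l : (1 <= i <= n)%N -> has_ubound (Sset i l).
Proof.
move=> Hi; have [H0 _] := box0 i Hi.
exists (`|pic i l| * uU i) => y [x /andP[Hx1 Hx2] <-].
have Hn : 0 <= rho * (`|x - uh i| `^ p) by apply: mulr_ge0 => //; apply: powR_ge0.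
have Hx : pic i l * x <= `|pic i l| * uU i.
  apply: le_trans (ler_norm _) _.
  rewrite normrM (@ger0_norm _ x); last exact: le_trans Hx1.
  by apply: ler_wpM2l.
lra.
Qed.

Lemma z_ge i l x : (1 <= i <= n)%N -> uL i <= x <= uU i ->
  pic i l * (x - s i) - rho * (`|x - uh i| `^ p) <= z i l.
Proof.
move=> Hi Hx.
have E : z i l = - s i * pic i l + sup (Sset i l) by [].
have H := ub_le_sup (S_ub i l Hi) (_ : Sset i l (pic i l * x - rho * (`|x - uh i| `^ p))).
have {}H := H ltac:(by exists x).
rewrite E; lra.
Qed.

Lemma obj_ge0 u w v : lp_feasible n s u w v -> 0 <= lp_obj n c d C w v.
Proof.
move=> [Hw1 [Hw [Hv _]]]; rewrite /lp_obj; apply: addr_ge0.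
  rewrite big_nat_cond; apply: sumr_ge0 => i /andP[Hi _].
  have [Hc Hd] := cd0 i ltac:(lia).
  apply: addr_ge0; apply: mulr_ge0 => //; [apply: Hw | apply: Hv]; lia.
apply: mulr_ge0 => //; apply: Hw; lia.
Qed.

Lemma f_le_greedy u : f_val n c d C s u <= lp_obj n c d C (gw s u) (gv s u).
Proof.
apply: ge_inf.
  by exists 0 => r [w [v [Hf ->]]]; exact: (@obj_ge0 u w v Hf).
by exists (gw s u), (gv s u); split => //; apply: greedy_feas.
Qed.

Lemma f_ge_dual u pi : dualf pi ->
  \sum_(1 <= i < n.+1) pi i * (u i - s i) <= f_val n c d C s u.
Proof.
move=> Hpi; apply: lb_le_inf.
  exists (lp_obj n c d C (gw s u) (gv s u)).
  by exists (gw s u), (gv s u); split => //; apply: greedy_feas.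
move=> r [w [v [Hf ->]]]; exact: weak_dual Hf Hpi.
Qed.

Lemma UB u : in_box n uL uU u ->
  f_val n c d C s u - rho * pnorm_pow n p u uh <= F n z n.
Proof.
move=> Hb.
have H1 := f_le_greedy u.
have H2 := greedy_bound s u.
have H3 := @F_mono R n (gu s u) z (fun i => rho * (`|u i - uh i| `^ p)).
have {}H3 := H3 ltac:(move=> i l Hi Hl; rewrite /gu /ee; exact: z_ge (Hb i Hi)) n (leqnn n).
rewrite /pnorm_pow mulr_sumr; lra.
Qed.

Lemma omega_le : omega n c d C uL uU uh p rho s <= F n z n.
Proof.
apply: ge_sup.
  exists (f_val n c d C s uL - rho * pnorm_pow n p uL uh), uL => //.
  move=> i Hi; have [_ H] := box0 i Hi; by rewrite lexx ltW.
by move=> r [u Hu <-]; apply: UB.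
Qed.

Lemma omega_ge eps : 0 < eps -> F n z n - eps <= omega n c d C uL uU uh p rho s.
Proof.
move=> He.
have [t [Lab [P0 [Pc [PL Po]]]]] := @D2 R n z n (leqnn n).
have Hfeas : t_feasible n t.
  split => // i Hi; have := Pc i Hi; rewrite /cov; case: ifP => //; lia.
have covsum : forall i (h : nat -> R), (1 <= i <= n)%N ->
    \sum_(1 <= k < i.+1) \sum_(i <= l < n.+2) h l * t k l = h (Lab i).
  move=> i h Hi.
  transitivity (\sum_(1 <= k < i.+1) \sum_(i <= l < n.+2) h (Lab i) * t k l).
    apply: eq_big_nat => k Hk; apply: eq_big_nat => l Hl.
    case: (eqVneq (t k l) 0) => [->|Hne]; first by rewrite !mulr0.
    by rewrite (PL i k l) //; lia.
  rewrite -[RHS]mulr1 -(proj1 Hfeas i Hi).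
  by rewrite mulr_sumr; apply: eq_bigr => k _; rewrite mulr_sumr.
pose pi := fun i => pic i (Lab i).
have Hpit : forall i, (1 <= i <= n)%N -> pit t i = pi i.
  by move=> i Hi; rewrite /pit (covsum i (fun l => pic i l)).
have Hdual : dualf pi.
  have [A [B Cc]] := @dualf_t t Hfeas.
  split; first by move=> i Hi; rewrite -Hpit //; exact: A.
  split; first by move=> i Hi; rewrite -!Hpit; [exact: B | lia | lia].
  by rewrite -Hpit; [exact: Cc | lia].
pose eps' := eps / n%:R.
have He' : 0 < eps' by apply: divr_gt0 => //; rewrite ltr0n.
have Hch : forall i, exists x : R, (1 <= i <= n)%N -> (uL i <= x <= uU i) /\ sup (Sset i (Lab i)) - eps' < pic i (Lab i) * x - rho * (`|x - uh i| `^ p).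
  move=> i; case: (boolP (1 <= i <= n)%N) => Hi; last by exists 0.
  have Hs : has_sup (Sset i (Lab i)).
    split; last exact: S_ub.
    exists (pic i (Lab i) * uL i - rho * (`|uL i - uh i| `^ p)); exists (uL i) => //.
    by have [_ H] := box0 i Hi; apply/andP; split; [exact: lexx | exact: ltW].
  have [y [x Hx <-] Hy] := sup_adherent He' Hs.
  by exists x.
case: (choice Hch) => uf Hu.
have Hb : in_box n uL uU uf by move=> i Hi; case: (Hu i Hi).
have Hom : f_val n c d C s uf - rho * pnorm_pow n p uf uh <= omega n c d C uL uU uh p rho s.
  apply: ub_le_sup; last by exists uf.
  by exists (F n z n) => r [v Hv <-]; exact: UB.
have Hf := @f_ge_dual uf pi Hdual.
have Hsum : \sum_(1 <= i < n.+1) (z i (Lab i) - eps') <=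
    \sum_(1 <= i < n.+1) pi i * (uf i - s i) - rho * pnorm_pow n p uf uh.
  rewrite /pnorm_pow mulr_sumr -sumrB; apply: ler_sum_nat => i Hi.
  have [_ Hlt] := Hu i ltac:(lia).
  have E : z i (Lab i) = - s i * pic i (Lab i) + sup (Sset i (Lab i)) by [].
  rewrite E /pi.
  have -> : pic i (Lab i) * (uf i - s i) = - s i * pic i (Lab i) + pic i (Lab i) * uf i by ring.
  lra.
have Hz : \sum_(1 <= i < n.+1) z i (Lab i) = F n z n.
  rewrite -Po /t_obj (@exch R n z t); apply: eq_big_nat => i Hi.
  by symmetry; exact: (covsum i (fun l => z i l) Hi).
have Heps : \sum_(1 <= i < n.+1) eps' = eps.
  rewrite sumr_const_nat subn1 /= -mulr_natr /eps' divfK // pnatr_eq0; lia.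
rewrite sumrB Hz Heps in Hsum.
lra.
Qed.

Lemma main_eq : omega n c d C uL uU uh p rho s = F n z n.
Proof.
apply/eqP; rewrite eq_le omega_le /=.
case: (lerP (F n z n) (omega n c d C uL uU uh p rho s)) => // H.
have H1 : 0 < (F n z n - omega n c d C uL uU uh p rho s) / 2.
  by apply: divr_gt0; rewrite ?subr_gt0.
have := @omega_ge _ H1; lra.
Qed.

End Omega.
End Main.

Theorem proposition2 (R : realType) (n : nat) (T C p rho : R)
  (c d s uL uU uh : nat -> R) :
  (1 <= n)%N -> 0 < T ->
  (forall i, (1 <= i <= n)%N -> 0 <= c i /\ 0 <= d i) -> 0 <= C ->
  (forall i, (1 <= i < n)%N -> d i.+1 - d i <= c i.+1) ->
  (forall i, (1 <= i <= n)%N -> 0 <= uL i /\ uL i < uU i) ->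
  in_box n uL uU uh ->
  1 <= p -> 0 <= rho ->
  (forall i, (1 <= i <= n)%N -> 0 <= s i) ->
  \sum_(1 <= i < n.+1) s i <= T ->
  let z := z_coef n c d C uL uU uh p rho s in
  (exists t, t_feasible n t /\ t_obj n z t = omega n c d C uL uU uh p rho s) /\
  (forall t, t_feasible n t -> t_obj n z t <= omega n c d C uL uU uh p rho s).
Proof.
move=> n1 _ cd0 C0 dinc box0 _ _ rho0 _ _ z.
have Eom := @main_eq R n C c d n1 cd0 C0 dinc uL uU uh p rho s box0 rho0.
rewrite Eom; split.
  have [t [Lab [P0 [Pc [PL Po]]]]] := @D2 R n z n (leqnn n).
  exists t; split => //; split => // i Hi; have := Pc i Hi; rewrite /cov.
  by case: ifP => //; lia.
by move=> t Ht; apply: D1.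
Qed.
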